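(* Let $k\geq 3$ and $\mathbf{x}=(x_1,\ldots,x_n)\in\Delta^{n-1}$, and let $\sigma=\sigma(\mathbf{x})$. If $|\mathbf{x}|_{\max}\leq 1/(4(k-2))$, then \[ S_k(\mathbf{x})<\sigma^k\binom{1/\sigma}{k}, \] unless the nonzero entries of $\mathbf{x}$ are equal.
   Context: $\Delta^{n-1}=\{\mathbf{x}\in\mathbb{R}^n: x_i\geq0 \text{ for all } i,\ \sum_i x_i=1\}$. $S_k(\mathbf{x})$ denotes the $k$-th elementary symmetric polynomial of $x_1,\ldots,x_n$. $\sigma(\mathbf{x})=x_1^{x_1}\cdots x_n^{x_n}$, with the convention $0^0=1$. $|\mathbf{x}|_{\max}=\max_i x_i$. For real $s$, $\binom{s}{k}=s(s-1)\cdots(s-k+1)/k!$, so that $\sigma^k\binom{1/\sigma}{k}=\frac{1}{k!}(1-\sigma)(1-2\sigma)\cdots(1-(k-1)\sigma)$. *)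

(* Defs.v *)
From HB Require Import structures.
From mathcomp Require Import all_boot all_order all_algebra.
From mathcomp Require Import reals exp.
Set Implicit Arguments. Unset Strict Implicit. Unset Printing Implicit Defensive.
Import Order.TTheory GRing.Theory Num.Theory.
Local Open Scope ring_scope.

Definition in_simplex (R : realType) (n : nat) (x : 'I_n -> R) : Prop :=
  (forall i, 0 <= x i) /\ \sum_(i < n) x i = 1.

Definition elem_sym (R : realType) (n k : nat) (x : 'I_n -> R) : R :=
  \sum_(I : {set 'I_n} | #|I| == k) \prod_(i in I) x i.

(* sigma(x) = prod x_i^{x_i}, with 0^0 = 1 (powR 0 0 = 1). *)
Definition sigma (R : realType) (n : nat) (x : 'I_n -> R) : R :=
  \prod_(i < n) powR (x i) (x i).

Definition rbinom (R : realType) (s : R) (k : nat) : R :=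
  (\prod_(j < k) (s - j%:R)) / (k`!)%:R.

(* Maximum entry |x|_max (for n = 0 it is 0, irrelevant on the simplex). *)
Definition max_entry (R : realType) (n : nat) (x : 'I_n -> R) : R :=
  \big[Num.max/0]_(i < n) x i.

(* Main.v *)
Require Import Defs.
From HB Require Import structures.
From mathcomp Require Import all_boot all_order all_algebra.
From mathcomp Require Import boolp classical_sets functions set_interval topology normedtype derive realfun sequences reals exp.
From mathcomp Require Import ring lra.
Import Order.TTheory GRing.Theory Num.Theory.
Import numFieldNormedType.Exports.
Local Open Scope ring_scope.

Section Logs.
Variable R : realType.
Local Open Scope classical_set_scope.
Local Open Scope ring_scope.

Lemma ln_le_sub1 (t : R) : 0 < t -> ln t <= t - 1.
Proof.
move=> t0; have := expR_ge1Dx (ln t); rewrite lnK ?posrE //; lra.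
Qed.

Lemma ln_lt_sub1 (t : R) : 0 < t -> t != 1 -> ln t < t - 1.
Proof.
move=> t0 t1; have : ln t != 0 by rewrite ln_eq0.
move/expR_gt1Dx; rewrite lnK ?posrE //; lra.
Qed.

Let fb := ((id : R -> R) ^+ 2 - (cst 1 : R -> R) - (cst 2 : R -> R) * ((id : R -> R) * (@ln R))).

Let fb_der (u : R) : 0 < u -> is_derive u 1 fb (2 * u - 2 * (ln u + 1)).
Proof.
move=> u0; apply: is_derive_eq.
  apply: is_deriveB; apply: is_deriveM; apply: is_deriveM; exact: is_derive1_ln.
rewrite /= !fctE.
rewrite scaler0 addr0 -[u *: u^-1]/(u * u^-1) mulfV ?gt_eqF // expr1.
rewrite -[2 *: _]/(2 * _) -[(2 * u)%:A]/((2 * u) * 1) -[(ln u)%:A]/(ln u * 1).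
ring.
Qed.

Lemma ln_b (t : R) : 1 <= t -> 2 * t * ln t <= t ^+ 2 - 1.
Proof.
move=> t1; rewrite -subr_ge0.
have -> : t ^+ 2 - 1 - 2 * t * ln t = fb t - fb 1 by rewrite /fb !fctE ln1 /=; ring.
have hd : forall u, u \in `]1, t[ -> is_derive u 1 fb (2 * u - 2 * (ln u + 1)).
  move=> u; rewrite in_itv /= => /andP [u1 _].
  by apply: fb_der; apply: lt_trans u1.
have hc : {within `[1, t], continuous fb}.
  apply: continuous_in_subspaceT => u; rewrite inE /= in_itv /= => /andP [u1 _].
  have u0 : 0 < u by apply: (lt_le_trans ltr01 u1).
  apply: differentiable_continuous; apply/derivable1_diffP.
  by case: (@fb_der u u0).
have [c /andP [c1 ct] ->] := @MVT_segment R fb _ 1 t t1 hd hc.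
apply: mulr_ge0; last by rewrite subr_ge0.
have c0 : 0 < c by apply: (lt_le_trans ltr01 c1).
have := @ln_le_sub1 c c0; lra.
Qed.

Let fc := ((cst 2 : R -> R) * ((id : R -> R) - (cst 1 : R -> R)) - ((id : R -> R) + (cst 1 : R -> R)) * (@ln R)).

Let fc_der (u : R) : 0 < u -> is_derive u 1 fc (1 - u^-1 - ln u).
Proof.
move=> u0; apply: is_derive_eq.
  apply: is_deriveB. apply: is_deriveM. exact: is_derive1_ln.
rewrite /= !fctE.
rewrite -[2 *: _]/(2 * _) -[(u+1) *: _]/((u+1) * u^-1) scaler0 -[ln u *: _]/(ln u * (1 + 0)).
by field; rewrite gt_eqF.
Qed.

Lemma ln_c (t : R) : 0 < t -> t <= 1 -> (t + 1) * ln t <= 2 * (t - 1).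
Proof.
move=> t0 t1; rewrite -subr_ge0.
have -> : 2 * (t - 1) - (t + 1) * ln t = - (fc 1 - fc t) by rewrite /fc !fctE ln1 /=; ring.
have hd : forall u, u \in `]t, 1[ -> is_derive u 1 fc (1 - u^-1 - ln u).
  move=> u; rewrite in_itv /= => /andP [tu _].
  by apply: fc_der; apply: lt_trans tu.
have hc : {within `[t, 1], continuous fc}.
  apply: continuous_in_subspaceT => u; rewrite inE /= in_itv /= => /andP [tu _].
  have u0 : 0 < u by apply: (lt_le_trans t0 tu).
  apply: differentiable_continuous; apply/derivable1_diffP.
  by case: (@fc_der u u0).
have [c /andP [tc c1] ->] := @MVT_segment R fc _ t 1 t1 hd hc.
rewrite oppr_ge0; apply: mulr_le0_ge0; last by rewrite subr_ge0.
have c0 : 0 < c by apply: (lt_le_trans t0 tc).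
have ci : 0 < c^-1 by rewrite invr_gt0.
have := @ln_le_sub1 _ ci; rewrite lnV ?posrE //; lra.
Qed.
End Logs.

From mathcomp Require Import all_boot all_order all_algebra.
Import Order.TTheory GRing.Theory Num.Theory.

Set Implicit Arguments. Unset Strict Implicit.
Section Comb.
Variable R : realType.
Variable n : nat.
Variable x : 'I_n -> R.

Definition esA (A : {set 'I_n}) (m : nat) : R :=
  \sum_(S : {set 'I_n} | (S \subset A) && (#|S| == m)) \prod_(i in S) x i.

Lemma esA_setT k : elem_sym k x = esA setT k.
Proof. by apply: eq_bigl => S; rewrite subsetT. Qed.

Lemma esA0 (A : {set 'I_n}) : esA A 0 = 1.
Proof.
rewrite /esA (big_pred1 set0); first by rewrite big_set0.
move=> S /=; rewrite cards_eq0.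
by case: eqP => [->|_]; rewrite ?sub0set ?andbF.
Qed.

Lemma esA_in (A : {set 'I_n}) (m : nat) (j : 'I_n) : j \in A ->
  x j * esA (A :\ j) m =
  \sum_(S : {set 'I_n} | (S \subset A) && (#|S| == m.+1) && (j \in S)) \prod_(i in S) x i.
Proof.
move=> jA; rewrite /esA big_distrr /=; apply/esym.
rewrite (reindex_onto (fun S => j |: S) (fun S => S :\ j)) /=; last first.
  by move=> S /andP [_ jS]; rewrite setD1K.
apply: eq_big => S.
  rewrite setU11 andbT subsetD1.
  case jS: (j \in S) => /=.
    rewrite andbF andFb; apply/negbTE/negP => /andP [_ /eqP E].
    by move: jS; rewrite -E !inE eqxx.
  rewrite (setU1K (negbT jS)) eqxx andbT cardsU1 jS /= add1n eqSS.
  by rewrite andbT subUset sub1set jA.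
move=> /andP [_ /eqP E]; have jS : j \notin S by rewrite -E !inE eqxx.
by rewrite big_setU1.
Qed.


Lemma esA_rem (A : {set 'I_n}) (m : nat) (j : 'I_n) : j \in A ->
  esA A m.+1 = esA (A :\ j) m.+1 + x j * esA (A :\ j) m.
Proof.
move=> jA; rewrite esA_in // {1}/esA (bigID (fun S : {set 'I_n} => j \in S)) /= addrC.
congr (_ + _); apply: eq_bigl => S.
by rewrite subsetD1 -andbA [(#|S| == _) && _]andbC andbA.
Qed.


Lemma esA_count (A : {set 'I_n}) (m : nat) :
  (m.+1)%:R * esA A m.+1 = \sum_(j in A) x j * esA (A :\ j) m.
Proof.
rewrite (eq_bigr _ (fun j jA => @esA_in A m j jA)) /esA mulr_sumr.
rewrite (eq_bigr (fun S : {set 'I_n} => \sum_(j in S) \prod_(i in S) x i)); last first.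
  move=> S /andP [_ /eqP cS]; rewrite sumr_const cS mulr_natl //.
rewrite (exchange_big_dep (fun j => j \in A)) /=; last first.
  by move=> S j /andP [SA _] jS; apply: (subsetP SA).
by apply: eq_bigr => j jA; apply: eq_bigl => S.
Qed.

Lemma esA_split (A : {set 'I_n}) (m : nat) :
  \sum_(j in A) x j * esA (A :\ j) m =
  \sum_(S : {set 'I_n} | (S \subset A) && (#|S| == m))
     (\prod_(i in S) x i) * (\sum_(j in A :\: S) x j).
Proof.
rewrite (eq_bigr (fun S : {set 'I_n} => \sum_(j in A :\: S) (\prod_(i in S) x i) * x j)); last first.
  by move=> S _; rewrite mulr_sumr.
rewrite (exchange_big_dep (fun j => j \in A)) /=; last first.
  by move=> S j _; rewrite in_setD => /andP [].
apply: eq_bigr => j jA; rewrite /esA mulr_sumr.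
apply: eq_big => [S|S _]; last by rewrite mulrC.
by rewrite subsetD1 in_setD jA; case: (S \subset A); case: (j \in S); case: (#|S| == m).
Qed.


Lemma esA_ge0 (A : {set 'I_n}) m : (forall i, 0 <= x i) -> 0 <= esA A m.
Proof.
move=> x0; rewrite /esA; apply: sumr_ge0 => S _; apply: prodr_ge0 => i _; exact: x0.
Qed.

Lemma esA_lower (A : {set 'I_n}) (m : nat) (M : R) :
  (forall i, 0 <= x i) -> (forall i, x i <= M) ->
  (\sum_(j in A) x j - m%:R * M) * esA A m <= (m.+1)%:R * esA A m.+1.
Proof.
move=> x0 xM; rewrite esA_count esA_split /esA mulr_sumr.
apply: ler_sum => S /andP [SA /eqP cS].
rewrite mulrC; apply: ler_wpM2l; first by apply: prodr_ge0 => i _; exact: x0.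
rewrite (big_setID S) /= (setIidPr SA) lerBlDl lerD2r.
have -> : m%:R * M = \sum_(i in S) M by rewrite sumr_const cS mulr_natl.
by apply: ler_sum => i _; exact: xM.
Qed.

End Comb.

Unset Implicit Arguments.

Section Main.
Variables (R : realType) (n : nat) (x : 'I_n -> R) (M s : R).
Hypotheses (x0 : forall i, 0 <= x i) (xs : \sum_i x i = 1) (xM : forall i, x i <= M)
  (s0 : 0 < s) (sM : s <= M) (sumL : \sum_i x i * (ln (x i) - ln s) = 0).

Let E p i := esA x ([set: 'I_n] :\ i) p.

Lemma setD1C (i j : 'I_n) : [set: 'I_n] :\ i :\ j = [set: 'I_n] :\ j :\ i.
Proof. by apply/setP => y; rewrite !inE; case: (y == i); case: (y == j). Qed.

Lemma F_mono p i j : 0 < x i -> 0 < x j ->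
  (ln (x i) - ln (x j)) * (E p i - E p j) <= 0.
Proof.
move=> xi xj; case: p => [|q]; first by rewrite /E !esA0 subrr mulr0.
case: (eqVneq i j) => [->|ij]; first by rewrite !subrr mul0r.
have jA : j \in [set: 'I_n] :\ i by rewrite !inE eq_sym ij.
have iA : i \in [set: 'I_n] :\ j by rewrite !inE ij.
rewrite /E (esA_rem x _ jA) (esA_rem x _ iA) (setD1C j i).
set G := esA x _ q; set H := esA x _ q.+1.
have G0 : 0 <= G by apply: esA_ge0.
have -> : H + x j * G - (H + x i * G) = (x j - x i) * G by ring.
rewrite mulrA; apply: mulr_le0_ge0 => //.
case: (lerP (x i) (x j)) => h.
  apply: mulr_le0_ge0; first by rewrite subr_le0 ler_ln ?posrE.
  by rewrite subr_ge0.
apply: mulr_ge0_le0; first by rewrite subr_ge0 ler_ln ?posrE // ltW.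
by rewrite subr_le0 ltW.
Qed.


Let L i := ln (x i) - ln s.

Lemma xpos i : x i != 0 -> 0 < x i.
Proof. by move=> h; rewrite lt_neqAle eq_sym h x0. Qed.

Lemma prodsum (f g : 'I_n -> R) :
  \sum_i \sum_j f i * g j = (\sum_i f i) * (\sum_j g j).
Proof. by rewrite mulr_suml; apply: eq_bigr => i _; rewrite mulr_sumr. Qed.

Lemma sum4 (F1 F2 F3 F4 : 'I_n -> 'I_n -> R) :
  \sum_i \sum_j (F1 i j + F2 i j - F3 i j - F4 i j) =
  \sum_i \sum_j F1 i j + \sum_i \sum_j F2 i j - \sum_i \sum_j F3 i j - \sum_i \sum_j F4 i j.
Proof.
rewrite (eq_bigr (fun i => \sum_j F1 i j + \sum_j F2 i j - \sum_j F3 i j - \sum_j F4 i j)).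
  by rewrite !sumrB big_split.
by move=> i _; rewrite !sumrB big_split.
Qed.

Lemma cheb p : \sum_i x i * L i * E p i <= 0.
Proof.
have sumL' : \sum_i x i * L i = 0 := sumL.
have dbl : \sum_i \sum_j x i * x j * (L i - L j) * (E p i - E p j) =
           2 * \sum_i x i * L i * E p i.
  transitivity (\sum_i \sum_j ((x i * L i * E p i) * x j + x i * (x j * L j * E p j)
        - (x i * L i) * (x j * E p j) - (x i * E p i) * (x j * L j))).
    by apply: eq_bigr => i _; apply: eq_bigr => j _; ring.
  rewrite sum4 (prodsum (fun i => x i * L i * E p i) x) (prodsum x (fun j => x j * L j * E p j)).
  rewrite (prodsum (fun i => x i * L i) (fun j => x j * E p j)).
  rewrite (prodsum (fun i => x i * E p i) (fun j => x j * L j)).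
  rewrite xs sumL'; ring.
have : \sum_i \sum_j x i * x j * (L i - L j) * (E p i - E p j) <= 0.
  apply: sumr_le0 => i _; apply: sumr_le0 => j _.
  have [->|xi] := eqVneq (x i) 0; first by rewrite !mul0r.
  have [->|xj] := eqVneq (x j) 0; first by rewrite mulr0 !mul0r.
  have -> : L i - L j = ln (x i) - ln (x j) by rewrite /L; ring.
  rewrite -mulrA; apply: mulr_ge0_le0; first by apply: mulr_ge0.
  by apply: F_mono; apply: xpos.
rewrite dbl; lra.
Qed.

Lemma phi_ge0 i : 0 < x i -> 0 <= x i - s - s * L i.
Proof.
move=> xi; have t0 : 0 < x i / s by apply: divr_gt0.
have hl : L i = ln (x i / s) by rewrite /L ln_div ?posrE.
have := @ln_le_sub1 R _ t0; rewrite -hl => h.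
have xt : x i = (x i / s) * s by rewrite divfK ?gt_eqF.
rewrite {1}xt; set t := x i / s.
have : s * L i <= s * (t - 1) by rewrite ler_wpM2l // ltW.
lra.
Qed.

Lemma phi_gt0 i : 0 < x i -> x i != s -> 0 < x i - s - s * L i.
Proof.
move=> xi xs'; have t0 : 0 < x i / s by apply: divr_gt0.
have hl : L i = ln (x i / s) by rewrite /L ln_div ?posrE.
have t1 : x i / s != 1.
  have sn : s != 0 by rewrite gt_eqF.
  apply/eqP => h; move/eqP: xs'; apply.
  by rewrite -[x i](divfK sn) h mul1r.
have := @ln_lt_sub1 R _ t0 t1; rewrite -hl => h.
have xt : x i = (x i / s) * s by rewrite divfK ?gt_eqF.
rewrite {1}xt; set t := x i / s.
have : s * L i < s * (t - 1) by rewrite ltr_pM2l.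
lra.
Qed.

Lemma scal i : 0 < x i -> s * (x i - s) * L i <= 2 * M * (x i - s - s * L i).
Proof.
move=> xi; have t0 : 0 < x i / s by apply: divr_gt0.
have hl : L i = ln (x i / s) by rewrite /L ln_div ?posrE.
have ph := phi_ge0 _ xi.
move: ph; rewrite hl; set t := x i / s; set l := ln t => ph.
have xt : x i = t * s by rewrite /t divfK ?gt_eqF.
rewrite xt in ph *.
have hxM : t * s <= M by rewrite -xt.
case: (lerP 1 t) => t1.
  have hb := @ln_b R _ t1; rewrite -/l in hb.
  have l0 : 0 <= l by apply: ln_ge0.
  have h1 : 0 <= (3 * t - 1) * (t ^+ 2 - 1 - 2 * t * l).
    by apply: mulr_ge0; lra.
  have h2 : 0 <= (t - 1) ^+ 3 by apply: exprn_ge0; lra.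
  have h3 : 0 <= 2 * t * (2 * t * (t - 1 - l) - (t - 1) * l).
    have -> : 2 * t * (2 * t * (t - 1 - l) - (t - 1) * l) =
      (3 * t - 1) * (t ^+ 2 - 1 - 2 * t * l) + (t - 1) ^+ 3 by ring.
    lra.
  have h4 : 0 <= 2 * t * (t - 1 - l) - (t - 1) * l.
    by rewrite (pmulr_rge0 _ (_ : 0 < 2 * t)) in h3 => //; lra.
  have h5 : s * (t * s - s) * l <= 2 * (t * s) * (t * s - s - s * l).
    rewrite -subr_ge0.
    have -> : 2 * (t * s) * (t * s - s - s * l) - s * (t * s - s) * l =
       (s * s) * (2 * t * (t - 1 - l) - (t - 1) * l) by ring.
    by apply: mulr_ge0 => //; apply: mulr_ge0; apply: ltW.
  have h6 : 2 * (t * s) * (t * s - s - s * l) <= 2 * M * (t * s - s - s * l).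
    by apply: ler_wpM2r; [exact: ph | lra].
  lra.
have t1' : t <= 1 by apply: ltW.
have hc : (t + 1) * l <= 2 * (t - 1) := @ln_c R _ t0 t1'.
have h5 : s * (t * s - s) * l <= 2 * s * (t * s - s - s * l).
  rewrite -subr_ge0.
  have -> : 2 * s * (t * s - s - s * l) - s * (t * s - s) * l =
     (s * s) * (2 * (t - 1) - (t + 1) * l) by ring.
  by apply: mulr_ge0; [apply: mulr_ge0; apply: ltW | lra].
have h6 : 2 * s * (t * s - s - s * l) <= 2 * M * (t * s - s - s * l).
  by apply: ler_wpM2r; [exact: ph | have := sM; lra].
lra.
Qed.


Lemma keyL p : 4 * (p.+1)%:R * M <= 1 -> 0 <= \sum_i x i * (x i - s) * E p.+1 i.
Proof.
move=> hM.
have M0 : 0 <= M by have := sM; have := s0; lra.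
set e := esA x [set: 'I_n] p.+1.
have Ee : forall i, E p.+1 i = e - x i * E p i.
  by move=> i; rewrite /e (esA_rem x p (in_setT i)) /E; ring.
have sumL' : \sum_i x i * L i = 0 := sumL.
have term : forall i, x i * (x i - s) * E p.+1 i =
   x i * ((x i - s - s * L i) * E p.+1 i - s * (x i - s) * L i * E p i)
   + s * e * (x i * L i) - s ^+ 2 * (x i * L i * E p i).
  by move=> i; rewrite !Ee; ring.
rewrite (eq_bigr _ (fun i _ => term i)) !sumrB big_split /= -!mulr_sumr sumL' mulr0 addr0.
have hc := cheb p.
have hA : 0 <= \sum_i x i * ((x i - s - s * L i) * E p.+1 i - s * (x i - s) * L i * E p i).
  apply: sumr_ge0 => i _.
  have [->|xi] := eqVneq (x i) 0; first by rewrite mul0r.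
  have xi0 := xpos _ xi.
  apply: mulr_ge0; first exact: ltW.
  pose P : R := (p.+1)%:R.
  have P0 : 0 < P by rewrite ltr0n.
  set phi := x i - s - s * L i.
  set F := E p i; set E1 := E p.+1 i.
  have ph : 0 <= phi := phi_ge0 _ xi0.
  have F0 : 0 <= F by apply: esA_ge0.
  have sc : s * (x i - s) * L i <= 2 * M * phi := scal _ xi0.
  have sD : \sum_(j in [set: 'I_n] :\ i) x j = 1 - x i.
    have hs : \sum_j x j = x i + \sum_(j | j != i) x j by rewrite (bigD1 i).
    have -> : \sum_(j in [set: 'I_n] :\ i) x j = \sum_(j | j != i) x j.
      by apply: eq_bigl => j; rewrite !inE andbT.
    have := xs; lra.
  have low := esA_lower ([set: 'I_n] :\ i) p x0 xM.
  rewrite sD -/F -/E1 in low.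
  have hp : p%:R = P - 1 by rewrite /P -natr1; ring.
  rewrite hp in low.
  have h1 : phi * ((1 - x i - (P - 1) * M) * F) <= phi * (P * E1) by apply: ler_wpM2l.
  have h2 : P * (s * (x i - s) * L i * F) <= P * (2 * M * phi * F).
    by apply: ler_wpM2l; [apply: ltW | apply: ler_wpM2r].
  have h3 : 0 <= phi * F * (M - x i) by apply: mulr_ge0; [apply: mulr_ge0 | have := xM i; lra].
  have h4 : 0 <= phi * F * (1 - 3 * P * M).
    apply: mulr_ge0; first by apply: mulr_ge0.
    have : 0 <= P * M by apply: mulr_ge0 => //; apply: ltW.
    lra.
  have h5 : 0 <= P * (phi * E1 - s * (x i - s) * L i * F) by lra.
  by rewrite pmulr_rge0 in h5.
have : 0 <= s ^+ 2 by apply: exprn_ge0; apply: ltW.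
move=> s2; have : s ^+ 2 * (\sum_i x i * L i * E p i) <= 0 by apply: mulr_ge0_le0.
lra.
Qed.


Let e m := esA x [set: 'I_n] m.

Lemma sumT (F : 'I_n -> R) : \sum_(j in [set: 'I_n]) F j = \sum_j F j.
Proof. by apply: eq_bigl => j; rewrite in_setT. Qed.

Lemma rec1 : e 1 = 1.
Proof.
rewrite /e; have := esA_count x [set: 'I_n] 0; rewrite sumT mul1r => ->.
by rewrite -[RHS]xs; apply: eq_bigr => i _; rewrite esA0 mulr1.
Qed.

Lemma rec2 j : (j.+2)%:R * e j.+2 = e j.+1 - \sum_i x i ^+ 2 * E j i.
Proof.
rewrite /e esA_count sumT.
rewrite (eq_bigr (fun i => x i * e j.+1 - x i ^+ 2 * E j i)); last first.
  by move=> i _; rewrite /e /E (esA_rem x j (in_setT i)); ring.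
by rewrite sumrB -mulr_suml xs mul1r.
Qed.

Lemma stepL p : 4 * (p.+1)%:R * M <= 1 ->
  (p.+3)%:R * e p.+3 <= (1 - (p.+2)%:R * s) * e p.+2.
Proof.
move=> hM; have hk := keyL _ hM.
have hc := esA_count x [set: 'I_n] p.+1; rewrite sumT in hc.
rewrite rec2.
have : \sum_i x i * (x i - s) * E p.+1 i = \sum_i x i ^+ 2 * E p.+1 i - s * \sum_i x i * E p.+1 i.
  rewrite mulr_sumr -sumrB; apply: eq_bigr => i _; ring.
rewrite -hc -/(e p.+2) => h.
rewrite h in hk; lra.
Qed.

Lemma base : (exists i, 0 < x i /\ x i != s) -> 2 * e 2 < 1 - s.
Proof.
case=> i0 [xi0 xis].
have := rec2 0; rewrite rec1 => ->.
have h : \sum_i x i ^+ 2 * E 0 i - s = \sum_i x i * (x i - s - s * L i).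
  have sumL' : \sum_i x i * L i = 0 := sumL.
  have hE : \sum_i x i ^+ 2 * E 0 i = \sum_i x i ^+ 2.
    by apply: eq_bigr => i _; rewrite /E esA0 mulr1.
  rewrite hE [RHS](eq_bigr (fun i => x i ^+ 2 - s * x i - s * (x i * L i))); last by move=> i _; ring.
  rewrite !sumrB -!mulr_sumr sumL' xs; ring.
have : 0 < \sum_i x i * (x i - s - s * L i).
  rewrite (bigD1 i0) //=; apply: ltr_pwDl.
    by apply: mulr_gt0 => //; apply: phi_gt0.
  apply: sumr_ge0 => i _.
  have [->|xi] := eqVneq (x i) 0; first by rewrite mul0r.
  by apply: mulr_ge0; [apply: ltW; apply: xpos | apply: phi_ge0; apply: xpos].
lra.
Qed.

Let b m := (\prod_(j < m) (1 - j%:R * s)) / (m`!)%:R.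

Lemma bS m : (m.+1)%:R * b m.+1 = (1 - m%:R * s) * b m.
Proof.
rewrite /b big_ord_recr /= factS natrM.
have h1 : 1 + m%:R != 0 :> R by rewrite addrC natr1 pnatr_eq0.
have h2 : (m`!)%:R != 0 :> R by rewrite pnatr_eq0 -lt0n fact_gt0.
by field; rewrite h2 h1.
Qed.

Lemma b2 : 2 * b 2 = 1 - s.
Proof.
have b1 : b 1 = 1 by rewrite /b big_ord1 /= mul0r subr0 divr1.
by have := bS 1; rewrite b1 mulr1 mul1r.
Qed.

Lemma main_ineq k : (3 <= k)%N -> 4 * (k%:R - 2) * M <= 1 ->
  (exists i, 0 < x i /\ x i != s) -> e k < b k.
Proof.
move=> hk hMk hex.
have M0 : 0 <= M by have := sM; have := s0; lra.
have k3 : 3 <= k%:R :> R by rewrite ler_nat.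
have M4 : 4 * M <= 1.
  have : 0 <= (k%:R - 3) * M by apply: mulr_ge0 => //; lra.
  lra.
have key : forall p, (p.+2 <= k)%N -> e p.+2 < b p.+2.
  elim=> [_|p IH hp].
    have := base hex; have := b2; lra.
  have hp2 : (p.+2 <= k)%N by apply: ltnW.
  have IH' := IH hp2.
  have hpk : (p.+1)%:R <= k%:R - 2 :> R.
    have : (p.+3)%:R <= k%:R :> R by rewrite ler_nat.
    rewrite -[(p.+3)%:R]natr1 -[(p.+2)%:R]natr1; lra.
  have hM : 4 * (p.+1)%:R * M <= 1.
    have : 0 <= (k%:R - 2 - (p.+1)%:R) * M by apply: mulr_ge0 => //; lra.
    lra.
  have hs : (p.+2)%:R * s <= (p.+2)%:R * M.
    have : 0 <= (p.+2)%:R * (M - s) by apply: mulr_ge0 => //; have := sM; lra.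
    lra.
  have hc : 0 < 1 - (p.+2)%:R * s.
    move: hs; rewrite -[(p.+2)%:R]natr1 => hs.
    have : 0 <= s by apply: ltW.
    lra.
  have st := stepL _ hM.
  have bb := bS p.+2.
  have P0 : 0 < (p.+3)%:R :> R by rewrite ltr0n.
  have : (p.+3)%:R * e p.+3 < (p.+3)%:R * b p.+3.
    rewrite bb; apply: le_lt_trans st _; rewrite ltr_pM2l //.
  by rewrite ltr_pM2l.
by case: k hk {hMk k3 M4} key => [|[|k']] // _; apply.
Qed.

End Main.

Lemma le_max_entry (R : realType) (n : nat) (x : 'I_n -> R) i : x i <= max_entry x.
Proof.
rewrite /max_entry.
have H : forall r : seq 'I_n, i \in r -> x i <= \big[Num.max/0]_(j <- r) x j.
  elim=> // a r IH; rewrite inE big_cons /= => /orP [/eqP ->|/IH h].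
    by rewrite le_max lexx.
  by rewrite le_max h orbT.
by apply: H; rewrite mem_index_enum.
Qed.

Lemma sigmaE (R : realType) (n : nat) (x : 'I_n -> R) : (forall i, 0 <= x i) ->
  sigma x = expR (\sum_i x i * ln (x i)).
Proof.
move=> x0; rewrite /sigma expR_sum; apply: eq_bigr => i _.
rewrite /powR; case: eqP => [->|_]; first by rewrite mul0r expR0.
by [].
Qed.

Theorem theorem2 (R : realType) (n k : nat) (x : 'I_n -> R) :
  (3 <= k)%N ->
  in_simplex x ->
  max_entry x <= 1 / (4 * (k%:R - 2)) ->
  (exists i j : 'I_n, [/\ x i != 0, x j != 0 & x i != x j]) ->
  elem_sym k x < sigma x ^+ k * rbinom (1 / sigma x) k.
Proof.
move=> hk [x0 xs] hM [i [j [xi xj xij]]].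
set M := max_entry x.
have xM : forall i, x i <= M by move=> l; apply: le_max_entry.
have xpos : forall l, x l != 0 -> 0 < x l by move=> l h; rewrite lt_neqAle eq_sym h x0.
have M0 : 0 < M by apply: (lt_le_trans (xpos _ xi)).
set Lam := \sum_i x i * ln (x i).
set s := sigma x.
have sE : s = expR Lam by apply: sigmaE.
have s0 : 0 < s by rewrite sE expR_gt0.
have lns : ln s = Lam by rewrite sE expRK.
have sumL : \sum_i x i * (ln (x i) - ln s) = 0.
  rewrite lns (eq_bigr (fun i => x i * ln (x i) - Lam * x i)); last by move=> l _; ring.
  by rewrite sumrB -mulr_sumr xs mulr1 subrr.
have sM : s <= M.
  rewrite sE -[M]lnK ?posrE // ler_expR /Lam.
  have -> : ln M = \sum_i x i * ln M by rewrite -mulr_suml xs mul1r.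
  apply: ler_sum => l _.
  have [->|xl] := eqVneq (x l) 0; first by rewrite !mul0r.
  by rewrite ler_wpM2l // ler_ln ?posrE // xpos.
have k3 : 3 <= k%:R :> R by rewrite ler_nat.
have hMk : 4 * (k%:R - 2) * M <= 1.
  have K0 : 0 < 4 * (k%:R - 2) :> R by lra.
  by move: hM; rewrite ler_pdivlMr // mulrC.
have hex : exists l, 0 < x l /\ x l != s.
  case: (eqVneq (x i) s) => [his|his]; last by exists i; split => //; apply: xpos.
  exists j; split; first exact: xpos.
  by rewrite -his eq_sym.
have := @main_ineq R n x M s x0 xs xM s0 sM sumL k hk hMk hex.
rewrite esA_setT.
have -> : s ^+ k * rbinom (1 / s) k = (\prod_(j < k) (1 - j%:R * s)) / (k`!)%:R.
  rewrite /rbinom mulrA; congr (_ / _).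
  rewrite -[k in s ^+ k]card_ord -prodr_const -big_split /=.
  by apply: eq_bigr => l _; field; rewrite gt_eqF.
by [].
Qed.
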